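(* Let $G$ be a block graph with at least one edge and let $H$ be a maximal co-interval subgraph of $G$. Then there exist a block $Q$ of $G$ and vertices $u,v\in V(Q)$ (possibly $u=v$) such that $E(H)=E(Q_{u,v}(G))$.
   Context: All graphs are finite and simple. A block of a graph is a maximal connected subgraph that has no cut-vertex of its own; a block graph is a graph in which every block is complete. For a vertex $x$, $N_G(x)$ is its neighbourhood and $\delta_G(x)$ its set of incident edges. For a clique $Q$ in $G$ and $u,v\in V(Q)$, the big ant $Q_{u,v}(G)=\big(V(Q)\cup N_G(u)\cup N_G(v),\ E(Q)\cup\delta_G(u)\cup\delta_G(v)\big)$. A graph $H$ is co-interval if there is a map $I$ from $V(H)$ to closed real intervals with $xy\in E(H)$ iff $I(x)\cap I(y)=\emptyset$ for distinct $x,y$. A co-interval subgraph $H$ of $G$ is maximal if there is no co-interval subgraph $H'$ of $G$ with $E(H)\subsetneq E(H')$ (maximality refers only to edge sets; isolated vertices are disregarded). *)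

(* Defs.v *)
From mathcomp Require Import all_boot.
From Stdlib Require Import Reals.

Set Implicit Arguments.
Unset Strict Implicit.
Unset Printing Implicit Defensive.

Section Graphs.
Variable T : finType.

Definition simple_graph (e : rel T) : Prop :=
  symmetric e /\ irreflexive e.

(* G[S] (induced subgraph on S) is connected (the empty graph counts as
   connected vacuously). *)
Definition connected_in (e : rel T) (S : {set T}) : Prop :=
  forall y z, y \in S -> z \in S ->
    connect [rel a b | [&& e a b, a \in S & b \in S]] y z.

Definition nonseparable (e : rel T) (S : {set T}) : Prop :=
  connected_in e S /\ forall x, x \in S -> connected_in e (S :\ x).

(* A block: a maximal (nonempty) connected subgraph without a cut-vertex.
   Maximal such subgraphs are induced, so they are determined by vertex sets. *)
Definition is_block (e : rel T) (B : {set T}) : Prop :=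
  B != set0 /\ nonseparable e B /\
  forall B' : {set T}, B \subset B' -> nonseparable e B' -> B' = B.

Definition is_clique (e : rel T) (Q : {set T}) : Prop :=
  forall x y, x \in Q -> y \in Q -> x != y -> e x y.

Definition block_graph (e : rel T) : Prop :=
  forall B, is_block e B -> is_clique e B.

Definition co_interval (V : {set T}) (E : rel T) : Prop :=
  exists I : T -> (R * R),
    (forall x, x \in V -> (fst (I x) <= snd (I x))%R) /\
    forall x y, x \in V -> y \in V -> x != y ->
      (E x y <-> ((snd (I x) < fst (I y))%R \/ (snd (I y) < fst (I x))%R)).

Definition subgraph (e : rel T) (V : {set T}) (E : rel T) : Prop :=
  symmetric E /\ (forall x y, E x y -> e x y) /\
  (forall x y, E x y -> x \in V /\ y \in V).

Definition co_interval_subgraph (e : rel T) (V : {set T}) (E : rel T) : Prop :=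
  subgraph e V E /\ co_interval V E.

(* Maximality refers only to edge sets. *)
Definition maximal_co_interval_subgraph (e : rel T) (V : {set T}) (E : rel T)
  : Prop :=
  co_interval_subgraph e V E /\
  ~ (exists (V' : {set T}) (E' : rel T), co_interval_subgraph e V' E' /\
       (forall x y, E x y -> E' x y) /\ (exists x y, E' x y /\ ~ E x y)).

Definition big_ant_edges (e : rel T) (Q : {set T}) (u v : T) : rel T :=
  fun x y => e x y &&
    ([&& x \in Q & y \in Q] || [|| x == u, x == v, y == u | y == v]).

End Graphs.

(* Main.v *)
Require Import Defs.
From mathcomp Require Import all_boot fingraph.
From Stdlib Require Import Reals Lra Lia Classical.
From mathcomp Require Import zify.

Set Implicit Arguments.
Unset Strict Implicit.
Unset Printing Implicit Defensive.

Section S.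
Variable T : finType.
Variable e : rel T.
Hypothesis esym : symmetric e.

Local Notation rS S := [rel p q | [&& e p q, p \in S & q \in S]].

Lemma rS_sym (S : {set T}) : symmetric (rS S).
Proof. move=> p q /=; rewrite esym; by case: (p \in S); case: (q \in S); rewrite ?andbF. Qed.

Lemma step (S : {set T}) p q : e p q -> p \in S -> q \in S -> connect (rS S) p q.
Proof. move=> h hp hq; apply: connect1; by rewrite /= h hp hq. Qed.

Lemma conn_sub (S S' : {set T}) p q : S \subset S' -> connect (rS S) p q -> connect (rS S') p q.
Proof.
move=> sub; apply: connect_sub => u v /= /and3P [h hu hv]; apply: connect1.
by rewrite /= h (subsetP sub _ hu) (subsetP sub _ hv).
Qed.

Lemma star (S : {set T}) c : c \in S -> (forall z, z \in S -> connect (rS S) c z) -> connected_in e S.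
Proof.
move=> hc h y z hy hz. apply: connect_trans (h z hz).
rewrite (sym_connect_sym (rS_sym S)). exact: h.
Qed.

Lemma conn_union (A B : {set T}) c : connected_in e A -> connected_in e B -> c \in A -> c \in B -> connected_in e (A :|: B).
Proof.
move=> hA hB cA cB. apply: (@star _ c); first by rewrite inE cA.
move=> z; rewrite inE => /orP [zA|zB].
- apply: (conn_sub (subsetUl A B)); exact: hA.
- apply: (conn_sub (subsetUr A B)); exact: hB.
Qed.

Lemma nonsep_del (A : {set T}) w : nonseparable e A -> connected_in e (A :\ w).
Proof.
move=> [cA dA]; case: (boolP (w \in A)) => wA; first exact: dA.
rewrite (_ : A :\ w = A) //; apply/setP => z; rewrite !inE.
by case: (eqVneq z w) => // ->; rewrite (negbTE wA).
Qed.

Lemma nonsep_union (A B : {set T}) p q : nonseparable e A -> nonseparable e B -> p != q ->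
  p \in A -> p \in B -> q \in A -> q \in B -> nonseparable e (A :|: B).
Proof.
move=> nA nB pq pA pB qA qB; split.
  exact: (conn_union nA.1 nB.1 pA pB).
move=> w _; rewrite setDUl.
have [c [c1 c2]] : exists c, c \in A :\ w /\ c \in B :\ w.
  case: (eqVneq w p) => [->|wp]; [exists q | exists p]; rewrite !inE ?pA ?pB ?qA ?qB ?andbT //.
  by rewrite eq_sym.
  by rewrite eq_sym.
apply: (conn_union _ _ c1 c2); exact: nonsep_del.
Qed.

Lemma in4 (a y x b z : T) : (z \in [set a; y; x; b]) = [|| z == a, z == y, z == x | z == b].
Proof. by rewrite !inE -!orbA. Qed.

Lemma cycle4 a y x b : a != y -> a != x -> a != b -> y != x -> y != b -> x != b ->
  e a y -> e y x -> e x b -> e b a -> nonseparable e [set a; y; x; b].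
Proof.
move=> ay ax ab yx yb xb eay eyx exb eba.
have eya : e y a by rewrite esym.
have exy : e x y by rewrite esym.
have ebx : e b x by rewrite esym.
have eab : e a b by rewrite esym.
have ya : y != a by rewrite eq_sym.
have xa : x != a by rewrite eq_sym.
have ba : b != a by rewrite eq_sym.
have xy : x != y by rewrite eq_sym.
have by_ : b != y by rewrite eq_sym.
have bx : b != x by rewrite eq_sym.
split.
  apply: (@star _ a); first by rewrite !inE eqxx.
  move=> z; rewrite in4; case/or4P => /eqP ->.
  - exact: connect0.
  - by apply: step; rewrite // !inE eqxx ?orbT.
  - apply: (@connect_trans _ _ y); by apply: step; rewrite // !inE eqxx ?orbT.
  - by apply: step; rewrite // !inE eqxx ?orbT.
move=> w; rewrite in4; case/or4P => /eqP ->.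
- apply: (@star _ x); first by rewrite !inE eqxx xa ?orbT.
  move=> z; rewrite in_setD1 in4 => /andP [za]; case/or4P => /eqP zz; subst z.
  + by rewrite eqxx in za.
  + by apply: step; rewrite // !inE ?eqxx ?orbT ?xa ?ya.
  + exact: connect0.
  + by apply: step; rewrite // !inE ?eqxx ?orbT ?xa ?ba.
- apply: (@star _ b); first by rewrite !inE eqxx by_ ?orbT.
  move=> z; rewrite in_setD1 in4 => /andP [za]; case/or4P => /eqP zz; subst z.
  + by apply: step; rewrite // !inE ?eqxx ?orbT ?by_ ?ay.
  + by rewrite eqxx in za.
  + by apply: step; rewrite // !inE ?eqxx ?orbT ?xy ?by_.
  + exact: connect0.
- apply: (@star _ a); first by rewrite !inE eqxx ax ?orbT.
  move=> z; rewrite in_setD1 in4 => /andP [za]; case/or4P => /eqP zz; subst z.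
  + exact: connect0.
  + by apply: step; rewrite // !inE ?eqxx ?orbT ?yx ?ax.
  + by rewrite eqxx in za.
  + by apply: step; rewrite // !inE ?eqxx ?orbT ?bx ?ax.
- apply: (@star _ y); first by rewrite !inE eqxx yb ?orbT.
  move=> z; rewrite in_setD1 in4 => /andP [za]; case/or4P => /eqP zz; subst z.
  + by apply: step; rewrite // !inE ?eqxx ?orbT ?yb ?ab.
  + exact: connect0.
  + by apply: step; rewrite // !inE ?eqxx ?orbT ?yb ?xb.
  + by rewrite eqxx in za.
Qed.

Hypothesis eirr : irreflexive e.

Lemma ant_ci (Q : {set T}) a b (N : R) (k : T -> R) : is_clique e Q -> a \in Q -> b \in Q -> a != b ->
  (forall z, 0 <= k z /\ k z + 1 <= N)%R -> injective k ->
  co_interval_subgraph e setT (big_ant_edges e Q a b).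
Proof.
move=> Qcl aQ bQ ab hk kinj.
have eab : e a b by exact: Qcl.
have eba : e b a by rewrite esym.
have hab : (a == b) = false by exact: negbTE.
have hba : (b == a) = false by rewrite eq_sym.
split.
  split; first by move=> x y; rewrite /big_ant_edges esym;
    case: (x \in Q); case: (y \in Q); case: (x == a); case: (x == b); case: (y == a); case: (y == b);
    rewrite ?andbF ?andbT ?orbT ?orbF.
  split; first by move=> x y /andP [].
  by move=> x y _; rewrite !inE.
pose I z := if z == a then (-1, -1)%R else if z == b then (N+1, N+1)%R
   else if z \in Q then (k z, k z)
   else ((if e z a then -1/2 else -2)%R, (if e z b then N + 1/2 else N+2)%R).
have cls : forall z, [\/ z = a, z = b,
   [/\ (z == a) = false, (z == b) = false, e z a = true /\ e z b = true, z \in Q & I z = (k z, k z)] |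
   [/\ (z == a) = false, (z == b) = false, (z \in Q) = false &
     I z = ((if e z a then -1/2 else -2)%R, (if e z b then N + 1/2 else N+2)%R)]].
  move=> z; rewrite /I; case: (eqVneq z a) => [->|za]; first by constructor 1.
  case: (eqVneq z b) => [->|zb]; first by constructor 2.
  case: (boolP (z \in Q)) => zQ.
    by constructor 3; split => //; split; apply: Qcl => //; apply/negbT.
  constructor 4; split => //; apply/negbTE => //; apply: contraNneq zQ => ->.
have Ia : I a = (-1,-1)%R by rewrite /I eqxx.
have Ib : I b = (N+1,N+1)%R by rewrite /I eqxx hba.
have [N0 N1] := hk a.
exists I; split.
  move=> z _; case: (cls z) => [->|->|[_ _ _ _ ->]|[_ _ _ ->]]; rewrite ?Ia ?Ib /=; try lra.
  case: (e z a); case: (e z b); cbn [fst snd]; lra.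
move=> x y _ _ xy.
have [kx1 kx2] := hk x; have [ky1 ky2] := hk y.
rewrite /big_ant_edges.
case: (cls x) => [->|->|[xa xb [xea xeb] xQ ->]|[xa xb xQ ->]];
case: (cls y) => [->|->|[ya yb [yea yeb] yQ ->]|[ya yb yQ ->]];
rewrite ?Ia ?Ib ?aQ ?bQ ?eqxx ?hab ?hba ?eab ?eba;
try rewrite xa; try rewrite xb; try rewrite xQ; try rewrite ya; try rewrite yb; try rewrite yQ; try rewrite xea; try rewrite xeb; try rewrite yea; try rewrite yeb; rewrite ?eirr;
rewrite ?[e a _]esym ?[e b _]esym ?orbT ?orbF ?andbT ?andbF ?andFb ?andTb ?orFb ?orTb; try rewrite xea; try rewrite xeb; try rewrite yea; try rewrite yeb; cbn [fst snd]; cbv beta;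
idtac.
all: try by rewrite eqxx in xy.
all: try by move: xy; rewrite eqxx.
all: try (do ? (match goal with |- context [e ?p ?q] => case: (e p q) end); cbn [fst snd]; cbv beta;
   (split; [move=> H; cbv beta; try (rewrite /is_true in H; discriminate); lra | move=> [H|H]; cbv beta in H; try lra; done])).
rewrite Qcl //; split => // _.
case: (Rtotal_order (k x) (k y)) => [h|[h|h]]; [by left | | by right].
by move/eqP: xy; case; apply: kinj.
Qed.

Lemma ant_sym (Q : {set T}) a b : symmetric (big_ant_edges e Q a b).
Proof.
move=> x y; rewrite /big_ant_edges esym;
by case: (x \in Q); case: (y \in Q); case: (x == a); case: (x == b); case: (y == a); case: (y == b);
rewrite ?andbF ?andbT ?orbT ?orbF.
Qed.

Lemma edge_nonsep a b : e a b -> a != b -> nonseparable e [set a; b].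
Proof.
move=> eab ab; have eba : e b a by rewrite esym.
split.
  apply: (@star _ a); first by rewrite !inE eqxx.
  move=> z; rewrite !inE => /orP [] /eqP ->; first exact: connect0.
  by apply: step; rewrite // !inE eqxx ?orbT.
move=> w; rewrite !inE => /orP [] /eqP -> y z; rewrite !inE => /andP [yw hy] /andP [zw hz].
- rewrite (negbTE yw) /= in hy; rewrite (negbTE zw) /= in hz.
  by rewrite (eqP hy) (eqP hz); apply: connect0.
- rewrite (negbTE yw) orbF in hy; rewrite (negbTE zw) orbF in hz.
  by rewrite (eqP hy) (eqP hz); apply: connect0.
Qed.

Lemma max_ext (P : {set T} -> Prop) S0 : P S0 ->
  exists S, P S /\ S0 \subset S /\ forall S' : {set T}, S \subset S' -> P S' -> S' = S.
Proof.
move=> h.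
suff: forall n S1, P S1 -> #|T| - #|S1| <= n ->
  exists S, P S /\ S1 \subset S /\ forall S' : {set T}, S \subset S' -> P S' -> S' = S.
  by move/(_ _ S0 h (leqnn _)).
elim=> [|n IH] S1 h1 hn;
  case: (classic (exists S' : {set T}, S1 \subset S' /\ P S' /\ S' <> S1)) => [[S' [s1 [p1 n1]]]|no].
- have pr : S1 \proper S'.
    rewrite properEneq s1 andbT; apply/eqP => eq; exact: n1.
  have := proper_card pr; have : #|S'| <= #|T| by rewrite -cardsT; apply: subset_leq_card; apply: subsetT.
  lia.
- exists S1; split => //; split => // S' s p; apply: NNPP => ne; apply: no; by exists S'.
- have pr : S1 \proper S'.
    rewrite properEneq s1 andbT; apply/eqP => eq; exact: n1.
  have c1 := proper_card pr; have c2 : #|S'| <= #|T| by rewrite -cardsT; apply: subset_leq_card; apply: subsetT.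
  have [S [pS [sS mS]]] := IH S' p1 ltac:(lia).
  exists S; split => //; split => //; exact: subset_trans s1 sS.
- exists S1; split => //; split => // S' s p; apply: NNPP => ne; apply: no; by exists S'.
Qed.

Lemma block_of a b : e a b -> a != b -> exists Q, is_block e Q /\ a \in Q /\ b \in Q.
Proof.
move=> eab ab.
have [Q [nQ [sQ mQ]]] := @max_ext (nonseparable e) _ (edge_nonsep eab ab).
have aQ : a \in Q by apply: (subsetP sQ); rewrite !inE eqxx.
have bQ : b \in Q by apply: (subsetP sQ); rewrite !inE eqxx orbT.
exists Q; split; last by split.
split; first by apply/set0Pn; exists a.
by split.
Qed.

End S.

Lemma exists_min (A : eqType) (f : A -> R) (s : seq A) z0 : z0 \in s ->
  exists a, a \in s /\ forall z, z \in s -> (f a <= f z)%R.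
Proof.
elim: s z0 => [//|h t IH] z0 _.
case: t IH => [|h' t'] IH.
  exists h; split; first by rewrite inE eqxx.
  by move=> z; rewrite inE => /eqP ->; apply: Rle_refl.
have [a [ha Ha]] := IH h' (mem_head _ _).
case: (Rle_lt_dec (f h) (f a)) => c.
  exists h; split; first by rewrite inE eqxx.
  move=> z; rewrite inE => /orP [/eqP->|hz]; first exact: Rle_refl.
  apply: Rle_trans c _; exact: Ha.
exists a; split; first by rewrite inE ha orbT.
move=> z; rewrite inE => /orP [/eqP->|hz]; [lra | exact: Ha].
Qed.

Theorem lemma10 (T : finType) (e : rel T) (V : {set T}) (E : rel T) :
  simple_graph e -> block_graph e -> (exists x y, e x y) ->
  maximal_co_interval_subgraph e V E ->
  exists (Q : {set T}) (u v : T),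
    is_block e Q /\ u \in Q /\ v \in Q /\
    forall x y, E x y <-> big_ant_edges e Q u v x y.
Proof.
move=> [esym eirr] hbg [x0 [y0 e0]] [[[symE [Ee EV]] [I [Ile Iiff]]] Hmax].
have Eneq : forall x y, E x y -> x != y.
  move=> x y /Ee exy; apply: contraTneq exy => ->; by rewrite eirr.
suff [Q [a [b [hQ [aQ [bQ [ab hsub]]]]]]] : exists Q a b, is_block e Q /\ a \in Q /\ b \in Q /\
    a != b /\ (forall x y, E x y -> big_ant_edges e Q a b x y).
  exists Q, a, b; split => //; split => //; split => //.
  move=> x y; split; first exact: hsub.
  move=> hant; apply: NNPP => nE; apply: Hmax.
  exists setT, (big_ant_edges e Q a b); split; last first.
    by split; [exact: hsub | exists x, y].
  apply: (ant_ci esym eirr (k := fun z => INR (enum_rank z)) (N := INR #|T|)) => //.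
  - exact: (hbg Q hQ).
  - move=> z; split; first exact: pos_INR.
    rewrite -S_INR; apply: le_INR; apply/leP; exact: ltn_ord.
  - move=> z w /INR_eq h; apply: enum_rank_inj; exact: val_inj.
case: (classic (exists x y, E x y)) => [[x1 [y1 E1]]|noE]; last first.
  have x0y0 : x0 != y0 by apply: contraTneq e0 => ->; rewrite eirr.
  have [Q [hQ [x0Q y0Q]]] := block_of esym e0 x0y0.
  exists Q, x0, y0; do 4 (split => //).
  by move=> x y Exy; exfalso; apply: noE; exists x, y.
have orient : forall x y, E x y -> (snd (I x) < fst (I y))%R \/ (snd (I y) < fst (I x))%R.
  move=> x y Exy; have [xV yV] := EV _ _ Exy.
  exact: (proj1 (Iiff x y xV yV (Eneq _ _ Exy))).
have [x1V y1V] := EV _ _ E1.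
have x1e : x1 \in enum V by rewrite mem_enum.
have [a [aV ha]] := exists_min (fun z => snd (I z)) x1e.
have [b [bV hb]] := exists_min (fun z => (- fst (I z))%R) x1e.
rewrite mem_enum in aV; rewrite mem_enum in bV.
have ha' : forall z, z \in V -> (snd (I a) <= snd (I z))%R.
  by move=> z zV; apply: ha; rewrite mem_enum.
have hb' : forall z, z \in V -> (fst (I z) <= fst (I b))%R.
  move=> z zV; have := hb z; rewrite mem_enum => /(_ zV); lra.
have rab : (snd (I a) < fst (I b))%R.
  case: (orient _ _ E1) => h.
  - have := ha' _ x1V; have := hb' _ y1V; lra.
  - have := ha' _ y1V; have := hb' _ x1V; lra.
have ab : a != b.
  apply/eqP => eab; rewrite eab in rab; have := Ile _ bV; lra.
have Eab : E a b by apply: (proj2 (Iiff a b aV bV ab)); left.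
have [Q [hQ [aQ bQ]]] := block_of esym (Ee _ _ Eab) ab.
exists Q, a, b; do 4 (split => //).
have key : forall x y, E x y -> (snd (I x) < fst (I y))%R -> big_ant_edges e Q a b x y.
  move=> x y Exy hxy; have [xV yV] := EV _ _ Exy.
  have hx : (snd (I x) < fst (I b))%R by have := hb' _ yV; lra.
  have hy : (snd (I a) < fst (I y))%R by have := ha' _ xV; lra.
  rewrite /big_ant_edges (Ee _ _ Exy) /=.
  case: (eqVneq x a) => [->|xa]; first by rewrite /= ?orbT.
  case: (eqVneq y b) => [->|yb]; first by rewrite /= ?orbT.
  have xb : x != b by apply/eqP => exb; rewrite exb in hx; have := Ile _ bV; lra.
  have ya : y != a by apply/eqP => eya; rewrite eya in hy; have := Ile _ aV; lra.
  have xy := Eneq _ _ Exy.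
  have Exb : E x b by apply: (proj2 (Iiff x b xV bV xb)); left.
  have ay : a != y by rewrite eq_sym.
  have ax : a != x by rewrite eq_sym.
  have yx : y != x by rewrite eq_sym.
  have Eay : E a y by apply: (proj2 (Iiff a y aV yV ay)); left.
  have eyx : e y x by rewrite esym; exact: Ee.
  have eba : e b a by rewrite esym; exact: Ee.
  have hC := cycle4 esym ay ax ab yx yb xb (Ee _ _ Eay) eyx (Ee _ _ Exb) eba.
  have aC : a \in [set a; y; x; b] by rewrite !inE eqxx.
  have bC : b \in [set a; y; x; b] by rewrite !inE eqxx !orbT.
  have hU := nonsep_union esym hQ.2.1 hC ab aQ aC bQ bC.
  have eqQ := hQ.2.2 _ (subsetUl Q _) hU.
  have xQ : x \in Q by rewrite -eqQ !inE eqxx !orbT.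
  have yQ : y \in Q by rewrite -eqQ !inE eqxx !orbT.
  by rewrite xQ yQ.
move=> x y Exy; case: (orient _ _ Exy) => h; first exact: key.
rewrite (ant_sym esym); apply: (key y x) => //; by rewrite symE.
Qed.
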